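(* Let $d \equiv 2 \pmod 4$ be a square-free positive integer such that both equations $x^2 - dy^2 = -1$ and $x^2 - dy^2 = 6$ have solutions in integers $x, y$. Let $n = 4m + 4k\sqrt{d}$ with $m, k \in \mathbb{Z}$, and suppose it is not the case that both $m \equiv 5 \pmod 6$ and $k \equiv 3 \pmod 6$. Then there exist infinitely many $D(n)$-quadruples in $\mathbb{Z}[\sqrt{d}]$.
   Context: For $n \in \mathbb{Z}[\sqrt{d}]$, a set $\{a_1,a_2,a_3,a_4\}$ of four distinct non-zero elements of $\mathbb{Z}[\sqrt{d}]$ is called a $D(n)$-quadruple in $\mathbb{Z}[\sqrt{d}]$ if $a_ia_j + n$ is a square of an element of $\mathbb{Z}[\sqrt{d}]$ for all $1 \le i < j \le 4$. *)

(* Defs.v *)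
From mathcomp Require Import all_boot all_order all_algebra.
Set Implicit Arguments. Unset Strict Implicit. Unset Printing Implicit Defensive.
Import Order.TTheory GRing.Theory Num.Theory.
Local Open Scope ring_scope.

(* Elements of Z[sqrt d] are represented as pairs (a, b) : int * int, standing
   for a + b*sqrt d.  For square-free d > 1 this representation is unique. *)
Definition zsd := (int * int)%type.

Definition zsd_add (x y : zsd) : zsd := (x.1 + y.1, x.2 + y.2).
Definition zsd_mul (d : int) (x y : zsd) : zsd :=
  (x.1 * y.1 + d * x.2 * y.2, x.1 * y.2 + x.2 * y.1).

Definition zsd_square (d : int) (x : zsd) : Prop :=
  exists y : zsd, zsd_mul d y y = x.

Definition is_Dquadruple (d : int) (n : zsd) (q : seq zsd) : Prop :=
  [/\ size q = 4%N, uniq q, (0, 0) \notin q &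
      forall i j : nat, (i < j < 4)%N ->
        zsd_square d (zsd_add (zsd_mul d (nth (0,0) q i) (nth (0,0) q j)) n)].

Definition squarefree (d : nat) : Prop :=
  (0 < d)%N /\ forall p : nat, (p * p %| d)%N -> p = 1%N.

(* Main.v *)
Require Import Defs.
From mathcomp Require Import all_boot all_order all_algebra all_field.
From mathcomp Require Import ring lra zify.
Import Order.TTheory GRing.Theory Num.Theory.
Local Open Scope ring_scope.



Lemma nosq_nat (d U V : nat) : (d %% 4 = 2)%N -> (0 < V)%N -> (U ^ 2 <> d * V ^ 2)%N.
Proof.
move=> hd hV hE.
have hd0 : (0 < d)%N by case: d hd {hE} => //.
have hU : (0 < U)%N.
  case: U hE => // /esym /eqP; rewrite muln_eq0 expn_eq0 /=; case/orP => /eqP h; lia.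
have hl := congr1 (logn 2) hE.
rewrite lognM ?expn_gt0 ?hV // !lognX in hl.
have hld : logn 2 d = 1%N.
  have -> : d = (2 * (d %/ 4 * 2 + 1))%N by rewrite {1}(divn_eq d 4) hd; lia.
  have ho : logn 2 (d %/ 4 * 2 + 1) = 0%N.
    rewrite lognE /=.
    have -> : (2 %| d %/ 4 * 2 + 1)%N = false by rewrite dvdn_addr ?dvdn_mull.
    by rewrite andbF.
  by rewrite addn1 in ho; rewrite lognM ?addn1 // ho addn0 logn_prime.
rewrite hld in hl. lia.
Qed.

Lemma nosq_int (d : nat) (u v : int) : (d %% 4 = 2)%N -> v != 0 -> u ^+ 2 != d%:Z * v ^+ 2.
Proof.
move=> hd hv; apply/eqP => hE.
have := congr1 absz hE. rewrite abszM !abszX /=.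
apply: nosq_nat hd _. by rewrite absz_gt0.
Qed.

Definition phi (s : algC) (z : zsd) : algC := z.1%:~R + z.2%:~R * s.

Lemma phi_add s x y : phi s (zsd_add x y) = phi s x + phi s y.
Proof. rewrite /phi /zsd_add /=. ring. Qed.

Lemma phi_mul (d : int) s x y : s ^+ 2 = d%:~R ->
  phi s (zsd_mul d x y) = phi s x * phi s y.
Proof. move=> H; rewrite /phi /zsd_mul /= !rmorphD !rmorphM /= -H. ring. Qed.

Lemma phi_inj (d : nat) (s : algC) : (d %% 4 = 2)%N -> s ^+ 2 = (d%:Z)%:~R ->
  forall x y, phi s x = phi s y -> x = y.
Proof.
move=> hd hs [x1 x2] [y1 y2]; rewrite /phi /= => h.
have h' : (x1 - y1)%:~R + (x2 - y2)%:~R * s = 0 :> algC.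
  have -> : (x1 - y1)%:~R + (x2 - y2)%:~R * s = (x1%:~R + x2%:~R * s) - (y1%:~R + y2%:~R * s) :> algC.
    by rewrite !rmorphB /=; ring.
  by rewrite h subrr.
have [v0|vn0] := eqVneq (x2 - y2) 0.
  rewrite v0 mul0r addr0 in h'.
  have : x1 - y1 = 0 by apply/eqP; rewrite -(eqr_int algC) h'.
  move: v0; move/eqP; rewrite subr_eq0 => /eqP -> /eqP; rewrite subr_eq0 => /eqP -> //.
exfalso.
have e1 : (x1 - y1)%:~R = - ((x2 - y2)%:~R * s) :> algC.
  by apply/eqP; rewrite -subr_eq0 opprK h'.
have e2 : ((x1 - y1) ^+ 2)%:~R = ((d%:Z * (x2 - y2) ^+ 2))%:~R :> algC.
  rewrite rmorphXn /= e1 rmorphM /= -hs rmorphXn /=. ring.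
move/eqP: e2; rewrite eqr_int => /eqP e3.
by move: (@nosq_int d (x1 - y1) _ hd vn0); rewrite e3 eqxx.
Qed.
Definition ustep (dd p0 q0 : int) (pq : int * int) : int * int :=
  (pq.1 + p0 + 4 * pq.1 * p0 + dd * pq.2 * q0, pq.2 + q0 + 4 * pq.1 * q0 + 4 * pq.2 * p0).
Definition useq dd p0 q0 j := iter j (ustep dd p0 q0) (0,0).

Lemma useq_prop (dd p0 q0 : int) : 0 <= dd -> 1 <= p0 -> 0 <= q0 ->
  2 * p0 + 4 * p0^+2 - dd * q0^+2 = 0 -> forall j : nat,
  [/\ j%:Z <= (useq dd p0 q0 j).1, 0 <= (useq dd p0 q0 j).2 &
      2 * (useq dd p0 q0 j).1 + 4 * (useq dd p0 q0 j).1^+2 - dd * (useq dd p0 q0 j).2^+2 = 0].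
Proof.
move=> hd hp0 hq0 hr0; elim=> [|j [ih1 ih2 ih3]]; first by rewrite /useq /=; split; [done|done|ring].
rewrite /useq iterS -/(useq dd p0 q0 j).
move: ih1 ih2 ih3; case: (useq dd p0 q0 j) => p q /= ih1 ih2 ih3.
have hp : 0 <= p by apply: le_trans ih1.
split.
- have h1 : 0 <= 4 * p * p0 by rewrite !mulr_ge0 // (le_trans _ hp0).
  have h2 : 0 <= dd * q * q0 by rewrite !mulr_ge0.
  rewrite -addn1 PoszD. lra.
- have h1 : 0 <= 4 * p * q0 by rewrite !mulr_ge0.
  have h2 : 0 <= 4 * q * p0 by rewrite !mulr_ge0 // (le_trans _ hp0).
  lra.
- have -> : 2 * (p + p0 + 4 * p * p0 + dd * q * q0) + 4 * (p + p0 + 4 * p * p0 + dd * q * q0) ^+ 2 -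
     dd * (q + q0 + 4 * p * q0 + 4 * q * p0) ^+ 2 =
     (2 * p + 4 * p^+2 - dd * q^+2) * ((1+4 * p0)^+2 - 4 * dd * q0^+2) + (2 * p0 + 4 * p0^+2 - dd * q0^+2) by ring.
  by rewrite ih3 hr0; ring.
Qed.

Lemma deg_bound (c1 c2 c3 e : algC) : 1 <= e -> c1 * e + c2 / e + c3 = 0 ->
  `|c1| * e <= `|c2| + `|c3|.
Proof.
move=> he h.
have e0 : 0 < e by apply: lt_le_trans he; exact: ltr01.
have -> : `|c1| * e = `|c2 / e + c3|.
  have -> : c2 / e + c3 = - (c1 * e) by apply/eqP; rewrite -subr_eq0 opprK addrC addrA h.
  by rewrite normrN normrM (gtr0_norm e0).
apply: le_trans (ler_normD _ _) _.
apply: lerD => //.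
rewrite normf_div (gtr0_norm e0).
apply: ler_piMr; first exact: normr_ge0.
by rewrite invf_le1.
Qed.

Lemma deg_app (u v w e al be ga : algC) : 1 <= e -> 1 <= `|al| -> `|be| <= 3 -> `|ga| <= 1 ->
  (al * u) * e + (be * v) / e + ga * w = 0 -> `|u| * e <= 3 * `|v| + `|w|.
Proof.
move=> he hal hbe hga h.
have e0 : 0 <= e by apply: le_trans he; exact: ler01.
have := @deg_bound _ _ _ _ he h; rewrite !normrM => h2.
apply: le_trans (le_trans _ h2) _.
  rewrite -mulrA; apply: ler_peMl => //; exact: mulr_ge0 (normr_ge0 _) e0.
apply: lerD.
  by apply: ler_wpM2r => //; exact: normr_ge0.
by rewrite -[X in _ <= X]mul1r; apply: ler_wpM2r => //; exact: normr_ge0.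
Qed.



Definition zneg (z : zsd) : zsd := (- z.1, - z.2).
Definition qa (dd m k p q : int) : zsd :=
  (4 * m + p * (10 * m - 2) - 4 * dd * q * k, 4 * k + 10 * p * k - 4 * q * m).
Definition qb (dd m k p q : int) : zsd :=
  (m - 1 + p * (10 * m - 2) - 4 * dd * q * k, k + 10 * p * k - 4 * q * m).
Definition qf (dd m k p q : int) : zsd :=
  ((1 + 4 * p) * (m - 1) + dd * (2 * q) * k, (1 + 4 * p) * k + 2 * q * (m - 1)).
Definition qg (dd m k p q : int) : zsd :=
  ((1 + 4 * p) * (9 * m - 1) - dd * (2 * q) * (9 * k), (1 + 4 * p) * (9 * k) - 2 * q * (9 * m - 1)).
Definition qr (dd m k p q : int) : zsd :=
  (2 * m * (1 + 4 * p) - 5 * dd * q * k, 2 * k * (1 + 4 * p) - q * (5 * m - 1)).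

Lemma phi_neg s z : phi s (zneg z) = - phi s z.
Proof. rewrite /phi /zneg /= !rmorphN /=; ring. Qed.

Section Gen.
Variables (d : nat) (m k p q : int) (s : algC).
Hypothesis hs : s ^+ 2 = (d%:Z)%:~R.
Let dd := d%:Z.
Let E := phi s (1 + 4 * p, 2 * q).
Let E' := phi s (1 + 4 * p, - (2 * q)).
Let M := phi s (m, k).

Lemma phi_qa : 4 * phi s (qa dd m k p q) = E * (M - 1) + E' * (9 * M - 1) + 6 * M + 2.
Proof.
rewrite /E /E' /M /phi /qa /= !(rmorphD, rmorphB, rmorphM, rmorphN) /= -/dd.
rewrite -hs. ring.
Qed.

Lemma phi_qb : 4 * phi s (qb dd m k p q) = E * (M - 1) + E' * (9 * M - 1) - 6 * M - 2.
Proof.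
rewrite /E /E' /M /phi /qb /= !(rmorphD, rmorphB, rmorphM, rmorphN) /= -/dd.
rewrite -hs. ring.
Qed.

Lemma phi_qr : 4 * phi s (qr dd m k p q) = E' * (9 * M - 1) - E * (M - 1).
Proof.
rewrite /E /E' /M /phi /qr /= !(rmorphD, rmorphB, rmorphM, rmorphN) /= -/dd.
rewrite -hs. ring.
Qed.

Lemma phi_qf : phi s (qf dd m k p q) = E * (M - 1).
Proof.
rewrite /E /M /phi /qf /= !(rmorphD, rmorphB, rmorphM, rmorphN) /= -/dd -hs. ring.
Qed.

Lemma phi_qg : phi s (qg dd m k p q) = E' * (9 * M - 1).
Proof.
rewrite /E' /M /phi /qg /= !(rmorphD, rmorphB, rmorphM, rmorphN) /= -/dd -hs. ring.
Qed.

Lemma phi_n : phi s (4 * m, 4 * k) = 4 * M.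
Proof. rewrite /M /phi /= !(rmorphD, rmorphB, rmorphM, rmorphN) /=. ring. Qed.

Lemma phi_s3 : phi s (3 * m - 1, 3 * k) = 3 * M - 1.
Proof. rewrite /M /phi /= !(rmorphD, rmorphB, rmorphM, rmorphN) /=. ring. Qed.

Hypothesis hrel : 2 * p + 4 * p ^+ 2 - dd * q ^+ 2 = 0.

Lemma hEE : E * E' = 1.
Proof.
have -> : E * E' = ((1 + 4 * p) ^+ 2 - 4 * dd * q ^+ 2)%:~R.
  rewrite /E /E' /phi /= !(rmorphD, rmorphB, rmorphM, rmorphN, rmorphXn) /= -/dd -hs. ring.
have -> : (1 + 4 * p) ^+ 2 - 4 * dd * q ^+ 2 = 1 + 4 * (2 * p + 4 * p ^+ 2 - dd * q ^+ 2) by ring.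
by rewrite hrel mulr0 addr0.
Qed.

Hypothesis hp : 0 <= p.
Hypothesis hq : 0 <= q.
Hypothesis hs0 : 0 <= s.

Lemma hE1 : 1 <= E.
Proof.
have h1 : (1:algC) <= (1 + 4 * p)%:~R by rewrite ler1z; lia.
have h2 : (0:algC) <= (2 * q)%:~R * s by apply: mulr_ge0 => //; rewrite ler0z; lia.
rewrite /E /phi /=. by have := lerD h1 h2; rewrite addr0.
Qed.

Lemma hE0 : E != 0.
Proof. by rewrite gt_eqF // (lt_le_trans ltr01 hE1). Qed.

Lemma hE' : E' = E^-1.
Proof. apply: (mulfI hE0). by rewrite hEE mulfV // hE0. Qed.

Lemma phi_qa' : phi s (qa dd m k p q) = (E * (M - 1) + E^-1 * (9 * M - 1) + 6 * M + 2) / 4.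
Proof. rewrite -hE' -phi_qa. by field. Qed.

Lemma phi_qb' : phi s (qb dd m k p q) = (E * (M - 1) + E^-1 * (9 * M - 1) - 6 * M - 2) / 4.
Proof. rewrite -hE' -phi_qb. by field. Qed.
Lemma phi_qr' : phi s (qr dd m k p q) = (E^-1 * (9 * M - 1) - E * (M - 1)) / 4.
Proof. rewrite -hE' -phi_qr. by field. Qed.
Lemma phi_qg' : phi s (qg dd m k p q) = E^-1 * (9 * M - 1).
Proof. by rewrite -hE' phi_qg. Qed.

Hypothesis hd : (d %% 4 = 2)%N.

Lemma sq_of (x y : zsd) : phi s y * phi s y = phi s x -> zsd_square dd x.
Proof. move=> h; exists y; apply: (@phi_inj d s hd hs). by rewrite phi_mul. Qed.

Let n := (4 * m, 4 * k).
Let a := qa dd m k p q.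
Let b := qb dd m k p q.
Let f := qf dd m k p q.
Let g := qg dd m k p q.
Let r := qr dd m k p q.

Ltac sqtac y := apply: (@sq_of _ y); rewrite !phi_add; rewrite !phi_mul //; rewrite ?phi_neg
  ?phi_qa' ?phi_qb' ?phi_qr' ?phi_qf ?phi_qg' ?phi_n ?phi_s3; by field; rewrite ?hE0.

Lemma sq_ab : zsd_square dd (zsd_add (zsd_mul dd a b) n).
Proof. sqtac r. Qed.
Lemma sq_af : zsd_square dd (zsd_add (zsd_mul dd a f) n).
Proof. sqtac (zsd_add a (zneg r)). Qed.
Lemma sq_ag : zsd_square dd (zsd_add (zsd_mul dd a g) n).
Proof. sqtac (zsd_add a r). Qed.
Lemma sq_bf : zsd_square dd (zsd_add (zsd_mul dd b f) n).
Proof. sqtac (zsd_add b (zneg r)). Qed.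
Lemma sq_bg : zsd_square dd (zsd_add (zsd_mul dd b g) n).
Proof. sqtac (zsd_add b r). Qed.
Lemma sq_fg : zsd_square dd (zsd_add (zsd_mul dd f g) n).
Proof. sqtac (3 * m - 1, 3 * k). Qed.

Hypothesis hN : (m, k) != (1, 0).
Hypothesis hbig : 3 * `|9 * M - 1| + `|6 * M + 2| < `|M - 1| * E.

Lemma nodeg (al be ga : algC) : 1 <= `|al| -> `|be| <= 3 -> `|ga| <= 1 ->
  (al * (M - 1)) * E + (be * (9 * M - 1)) / E + ga * (6 * M + 2) = 0 -> False.
Proof.
move=> h1 h2 h3 h4.
have := @deg_app _ _ _ _ _ _ _ hE1 h1 h2 h3 h4.
move=> h5; have := lt_le_trans hbig h5; by rewrite ltxx.
Qed.

Lemma phi00 : phi s (0, 0) = 0.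
Proof. by rewrite /phi /= mul0r addr0. Qed.

Ltac degtac x y c al be ga :=
  let hxy := fresh "hxy" in
  apply/eqP; intro hxy; apply: (@nodeg al be ga);
  [ by rewrite ?normrN ?normr1 ?normr0 ?normr_nat ?ler_nat ?ler1n ?ler01 ?lexx
  | by rewrite ?normrN ?normr1 ?normr0 ?normr_nat ?ler_nat ?ler1n ?ler01 ?lexx
  | by rewrite ?normrN ?normr1 ?normr0 ?normr_nat ?ler_nat ?ler1n ?ler01 ?lexx
  | apply: (@eq_trans _ _ (c * (phi s x - phi s y)));
    [ rewrite ?phi00 ?phi_qa' ?phi_qb' ?phi_qf ?phi_qg'; by field; rewrite ?hE0
    | by rewrite hxy subrr mulr0 ] ].


Lemma na0 : a != (0, 0). Proof. degtac a ((0, 0) : zsd) (4 : algC) (1 : algC) (1 : algC) (1 : algC). Qed.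
Lemma nb0 : b != (0, 0). Proof. degtac b ((0, 0) : zsd) (4 : algC) (1 : algC) (1 : algC) ((-1) : algC). Qed.
Lemma naf : a != f. Proof. degtac a f (4 : algC) ((-3) : algC) (1 : algC) (1 : algC). Qed.
Lemma nag : a != g. Proof. degtac a g (4 : algC) (1 : algC) ((-3) : algC) (1 : algC). Qed.
Lemma nbf : b != f. Proof. degtac b f (4 : algC) ((-3) : algC) (1 : algC) ((-1) : algC). Qed.
Lemma nbg : b != g. Proof. degtac b g (4 : algC) (1 : algC) ((-3) : algC) ((-1) : algC). Qed.
Lemma nfg : f != g. Proof. degtac f g (1 : algC) (1 : algC) ((-1) : algC) (0 : algC). Qed.

Lemma nab : a != b.
Proof.
apply/eqP => h; have := congr1 fst h; rewrite /a /b /qa /qb /= => h1.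
have : 3 * m + 1 = 0 by rewrite -[RHS](subrr (m - 1 + p * (10 * m - 2) - 4 * dd * q * k)) -{1}h1; ring.
lia.
Qed.

Lemma nf0 : f != (0, 0).
Proof.
apply/eqP => h; have := congr1 (phi s) h; rewrite phi_qf phi00 => /eqP.
rewrite mulf_eq0 (negbTE hE0) /= => /eqP h2.
have h3 : phi s (m - 1, k) = phi s (0, 0).
  rewrite phi00 -h2 /M /phi /= !(rmorphD, rmorphB) /=; ring.
have := @phi_inj d s hd hs _ _ h3 => -[h4 h5].
move/eqP: hN; apply; congr pair => //; lia.
Qed.

Lemma ng0 : g != (0, 0).
Proof.
apply/eqP => h; have := congr1 (phi s) h; rewrite phi_qg' phi00 => /eqP.
rewrite mulf_eq0 invr_eq0 (negbTE hE0) /= => /eqP h2.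
have h3 : phi s (9 * m - 1, 9 * k) = phi s (0, 0).
  rewrite phi00 -h2 /M /phi /= !(rmorphD, rmorphB, rmorphM) /=; ring.
have := @phi_inj d s hd hs _ _ h3 => -[h4 h5].
lia.
Qed.

Lemma gen_quad : is_Dquadruple dd n [:: a; b; f; g].
Proof.
split => //.
- rewrite /= !inE !negb_or nab naf nag nbf nbg nfg /=.
  done.
- rewrite !inE !negb_or !(eq_sym (0, 0)).
  by rewrite na0 nb0 nf0 ng0.
- move=> i j /andP [hij hj].
  case: i hij => [|[|[|i]]] hij; case: j hj hij => [|[|[|[|j]]]] //= _ _.
  + exact: sq_ab.
  + exact: sq_af.
  + exact: sq_ag.
  + exact: sq_bf.
  + exact: sq_bg.
  + exact: sq_fg.
Qed.

Lemma norm_f : `|phi s f| = `|M - 1| * E.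
Proof.
rewrite phi_qf normrM mulrC (ger0_norm (le_trans ler01 hE1)).
done.
Qed.
End Gen.



Lemma mem_le_sum (R : numDomainType) (T : eqType) (F : T -> R) (l : seq T) x :
  (forall z, 0 <= F z) -> x \in l -> F x <= \sum_(z <- l) F z.
Proof.
move=> hF; elim: l => [|y l ih] //=; rewrite inE big_cons => /orP [/eqP ->|hx].
  by rewrite lerDl sumr_ge0.
by apply: le_trans (ih hx) _; rewrite lerDr.
Qed.

Definition squad (t : int) : seq zsd :=
  [:: (2 * (t - 1), 0); (2 * (t + 1), 0); (8 * t, 0); (2 * (16 * t ^+ 3 - 4 * t), 0)].

Lemma sq_int (dd u w : int) : w ^+ 2 = u -> zsd_square dd (u, 0).
Proof. move=> h; exists (w, 0); rewrite /zsd_mul /= -h; congr pair; ring. Qed.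

Lemma squad_ok (dd t : int) : 2 <= t -> is_Dquadruple dd (4 * 1, 4 * 0) (squad t).
Proof.
move=> ht.
have e1 : 2 * (t - 1) < 2 * (t + 1) by lia.
have e2 : 2 * (t + 1) < 8 * t by lia.
have e3 : 8 * t < 2 * (16 * t ^+ 3 - 4 * t) by nia.
have e0 : 0 < 2 * (t - 1) by lia.
split => //.
- rewrite /squad /= !inE !xpair_eqE !eqxx !andbT.
  rewrite (lt_eqF e1) (lt_eqF (lt_trans e1 e2)) (lt_eqF (lt_trans e1 (lt_trans e2 e3))).
  by rewrite (lt_eqF e2) (lt_eqF (lt_trans e2 e3)) (lt_eqF e3).
- rewrite /squad !inE !xpair_eqE !eqxx !andbT.
  rewrite (lt_eqF e0) (lt_eqF (lt_trans e0 e1)) (lt_eqF (lt_trans e0 (lt_trans e1 e2))).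
  by rewrite (lt_eqF (lt_trans e0 (lt_trans e1 (lt_trans e2 e3)))).
- move=> i j /andP [hij hj].
  case: i hij => [|[|[|i]]] hij; case: j hj hij => [|[|[|[|j]]]] //= _ _;
    rewrite /zsd_add /zsd_mul /= !mulr0 !mul0r !addr0 ?add0r.
  + by apply: (@sq_int _ _ (2 * t)); ring.
  + by apply: (@sq_int _ _ (2 * (2 * t - 1))); ring.
  + by apply: (@sq_int _ _ (2 * (4 * t ^+ 2 - 2 * t - 1))); ring.
  + by apply: (@sq_int _ _ (2 * (2 * t + 1))); ring.
  + by apply: (@sq_int _ _ (2 * (4 * t ^+ 2 + 2 * t - 1))); ring.
  + by apply: (@sq_int _ _ (2 * (8 * t ^+ 2 - 1))); ring.
Qed.

Lemma special (dd : int) (avoid : seq (seq zsd)) :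
  exists q, is_Dquadruple dd (4 * 1, 4 * 0) q /\ forall s, s \in avoid -> ~ perm_eq q s.
Proof.
set S := \sum_(z <- flatten avoid) `|z.1|.
have hS : 0 <= S by apply: sumr_ge0.
exists (squad (2 + S)); split; first by apply: squad_ok; lia.
move=> s hs hp.
have hin : (8 * (2 + S), 0) \in flatten avoid.
  apply/flattenP; exists s => //; rewrite -(perm_mem hp) /squad !inE eqxx; by rewrite !orbT.
have := @mem_le_sum _ _ (fun z : zsd => `|z.1|) _ _ (fun z => normr_ge0 _) hin.
rewrite -/S /= ger0_norm; lia.
Qed.



Theorem theorem1p2 (d : nat) (m k : int) :
  squarefree d ->
  (d %% 4 = 2)%N ->
  (exists x y : int, x ^+ 2 - d%:Z * y ^+ 2 = -1) ->
  (exists x y : int, x ^+ 2 - d%:Z * y ^+ 2 = 6) ->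
  ~ ((m %% 6)%Z = 5 /\ (k %% 6)%Z = 3) ->
  forall avoid : seq (seq zsd),
    exists q : seq zsd,
      is_Dquadruple d%:Z (4 * m, 4 * k) q /\
      forall s, s \in avoid -> ~ perm_eq q s.
Proof.
move=> _ hd [x0 [y0 hxy]] _ _ avoid.
have [hN|hN] := eqVneq (m, k) (1, 0).
  by case: hN => -> ->; apply: special.
have hd2 : (2 <= d)%N by case: d hd {hxy hN} => [|[|d]].
set dd := d%:Z.
have hdd : 2 <= dd by rewrite /dd; lia.
pose X := `|x0|; pose Y := `|y0|.
have hX : x0 ^+ 2 = X ^+ 2 by rewrite real_normK // num_real.
have hY : y0 ^+ 2 = Y ^+ 2 by rewrite real_normK // num_real.
rewrite hX hY in hxy.
have hX0 : 0 <= X by apply: normr_ge0.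
have hY0 : 0 <= Y by apply: normr_ge0.
have hY1 : 1 <= Y by nia.
have hX1 : 1 <= X by nia.
pose p0 := 2 * dd * X ^+ 2 * Y ^+ 2.
pose q0 := 2 * X * Y * (2 * dd * Y ^+ 2 - 1).
have hp0 : 1 <= p0 by rewrite /p0; nia.
have hq0 : 0 <= q0 by rewrite /q0; nia.
have hr0 : 2 * p0 + 4 * p0 ^+ 2 - dd * q0 ^+ 2 = 0.
  have -> : 2 * p0 + 4 * p0 ^+ 2 - dd * q0 ^+ 2 =
     16 * dd ^+ 2 * X ^+ 2 * Y ^+ 4 * (X ^+ 2 - dd * Y ^+ 2 + 1) by rewrite /p0 /q0; ring.
  by rewrite hxy; ring.
pose s := sqrtC (d%:R : algC).
have hs : s ^+ 2 = (d%:Z)%:~R by rewrite sqrtCK.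
have hs0 : 0 <= s by rewrite sqrtC_ge0 ler0n.
pose M := phi s (m, k).
have hM1 : 0 < `|M - 1|.
  rewrite normr_gt0; apply/eqP => h.
  have h3 : phi s (m - 1, k) = phi s (0, 0).
    rewrite phi00 -h /M /phi /= !(rmorphD, rmorphB) /=; ring.
  have := @phi_inj d s hd hs _ _ h3 => -[h4 h5].
  by move/eqP: hN; apply; congr pair => //; lia.
pose T := 3 * `|9 * M - 1| + `|6 * M + 2| + \sum_(z <- flatten avoid) `|phi s z|.
have hT : 0 <= T.
  apply: addr_ge0; last by apply: sumr_ge0 => z _; apply: normr_ge0.
  by apply: addr_ge0; [apply: mulr_ge0; [apply: ler0n|apply: normr_ge0]|apply: normr_ge0].
have hT0 : 0 <= T / `|M - 1| by apply: divr_ge0 => //; apply: normr_ge0.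
pose j := Num.bound (T / `|M - 1|).
have hj := archi_boundP hT0.
have hdd0 : 0 <= dd by lia.
have [hpj hqj hrj] := @useq_prop dd p0 q0 hdd0 hp0 hq0 hr0 j.
set p := (useq dd p0 q0 j).1 in hpj hqj hrj.
set q := (useq dd p0 q0 j).2 in hpj hqj hrj.
have hp : 0 <= p by lia.
pose E := phi s (1 + 4 * p, 2 * q).
have hEj : (j%:R : algC) <= E.
  have h1 : (j%:R : algC) <= (1 + 4 * p)%:~R by rewrite -[j%:R]/((j%:Z)%:~R) ler_int; lia.
  have h2 : (0:algC) <= (2 * q)%:~R * s by apply: mulr_ge0 => //; rewrite ler0z; lia.
  rewrite /E /phi /=. by have := lerD h1 h2; rewrite addr0.
have hTE : T < `|M - 1| * E.
  have := lt_le_trans hj hEj; rewrite ltr_pdivrMr // mulrC //.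
have hbig : 3 * `|9 * M - 1| + `|6 * M + 2| < `|M - 1| * E.
  apply: le_lt_trans hTE; rewrite /T lerDl; apply: sumr_ge0 => z _; apply: normr_ge0.
have hrel : 2 * p + 4 * p ^+ 2 - (d%:Z) * q ^+ 2 = 0 by exact: hrj.
exists [:: qa dd m k p q; qb dd m k p q; qf dd m k p q; qg dd m k p q]; split.
  exact: (@gen_quad d m k p q s hs hrel hp hqj hs0 hd hN hbig).
move=> s0 hs0' hperm.
have hin : qf dd m k p q \in flatten avoid.
  apply/flattenP; exists s0 => //; rewrite -(perm_mem hperm) !inE eqxx; by rewrite !orbT.
have := @mem_le_sum _ _ (fun z : zsd => `|phi s z|) _ _ (fun z => normr_ge0 _) hin.
rewrite /= (@norm_f d m k p q s hs hrel hp hqj hs0) => hle.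
have : `|M - 1| * E <= T.
  apply: le_trans hle _; rewrite /T lerDr; apply: addr_ge0;
    [apply: mulr_ge0; [apply: ler0n|apply: normr_ge0]|apply: normr_ge0].
move=> h; have := lt_le_trans hTE h; by rewrite ltxx.
Qed.
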